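(* Let $L>0$, $M\ge1$ an integer, $\Delta x=L/M$, and cells $C_j=[x_{j-\frac12},x_{j+\frac12}]$ with centers $x_j=j\Delta x$, $j\in\{-M,\dots,M\}$. Let $H\in C^1([0,\infty))$, $V:\mathbb{R}\to\mathbb{R}$, and let $(W_k)_{k=-2M}^{2M}$ be real numbers with $W_{-k}=W_k$ for all $k$. Let $t\mapsto(\overline\rho_j(t))_{j=-M}^M$ be a differentiable solution on $(0,\infty)$, with $\overline\rho_j(t)\ge0$, of the ODE system \[ \frac{d\overline\rho_j}{dt}=-\frac{F_{j+\frac12}-F_{j-\frac12}}{\Delta x},\qquad j=-M,\dots,M, \] where at each time: slopes $(\rho_x)_j$ are chosen so that the point values $\rho_j^{\rm E}=\overline\rho_j+\frac{\Delta x}{2}(\rho_x)_j$ and $\rho_j^{\rm W}=\overline\rho_j-\frac{\Delta x}{2}(\rho_x)_j$ are nonnegative; $\xi_j=\Delta x\sum_{i=-M}^{M}W_{j-i}\overline\rho_i+H'(\overline\rho_j)+V(x_j)$; $u_{j+\frac12}=-\frac{\xi_{j+1}-\xi_j}{\Delta x}$, $u^\pm_{j+\frac12}$ its positive part $\max(u_{j+\frac12},0)$ and negative part $\min(u_{j+\frac12},0)$; $F_{j+\frac12}=u_{j+\frac12}^+\rho_j^{\rm E}+u_{j+\frac12}^-\rho_{j+1}^{\rm W}$ for $j=-M,\dots,M-1$; and $F_{-M-\frac12}=F_{M+\frac12}=0$. Define the discrete entropy and entropy dissipation \[ E_\Delta(t)=\Delta x\sum_{j=-M}^{M}\Big[\tfrac12\Delta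 x\sum_{i=-M}^{M}W_{j-i}\overline\rho_i\overline\rho_j+H(\overline\rho_j)+V(x_j)\overline\rho_j\Big],\qquad I_\Delta(t)=\Delta x\sum_{j=-M}^{M-1}\big(u_{j+\frac12}\big)^2\min\big(\rho_j^{\rm E},\rho_{j+1}^{\rm W}\big). \] Then $\frac{d}{dt}E_\Delta(t)\le -I_\Delta(t)$ for all $t>0$.
   Context: This is the one-dimensional semi-discrete finite-volume scheme with no-flux boundary conditions for $\rho_t=\partial_x\big[\rho\,\partial_x\big(H'(\rho)+V(x)+W*\rho\big)\big]$ on $[-L,L]$ with symmetric interaction potential $W$ and $\rho_0\ge0$; $W_{j-i}$ approximates $W(x_j-x_i)$ (e.g. $W_{j-i}=W(x_j-x_i)$), so the symmetry $W_{-k}=W_k$ reflects the symmetry of $W$. $E_\Delta$ is a discrete version of the free energy $E(\rho)=\int H(\rho)+\int V\rho+\frac12\iint W(x-y)\rho(x)\rho(y)$. *)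

(* Defs.v *)
From HB Require Import structures.
From mathcomp Require Import all_boot all_order all_algebra.
From mathcomp Require Import all_classical all_reals all_analysis.
Set Implicit Arguments. Unset Strict Implicit. Unset Printing Implicit Defensive.
Import Order.TTheory GRing.Theory Num.Theory.
Import numFieldNormedType.Exports.
Local Open Scope ring_scope.

(* Cell index convention: the paper's index j in {-M,...,M} is represented by
   the natural number j + M in {0,...,2M}.  Interface j+1/2 (paper) is the
   right interface of shifted cell j. *)

Section FVScheme.
Variables (R : realType) (L : R) (M : nat).
Variables (W : int -> R) (H' : R -> R) (V : R -> R).
Variables (rho rx : nat -> R -> R).

Definition dx : R := L / M%:R.

Definition xc (j : nat) : R := (j%:R - M%:R) * dx.

Definition rhoE (j : nat) (t : R) : R := rho j t + dx / 2 * rx j t.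
Definition rhoW (j : nat) (t : R) : R := rho j t - dx / 2 * rx j t.

Definition xi (j : nat) (t : R) : R :=
  dx * (\sum_(0 <= i < (2 * M).+1) W (j%:Z - i%:Z) * rho i t)
  + H' (rho j t) + V (xc j).

Definition u (j : nat) (t : R) : R := - ((xi j.+1 t - xi j t) / dx).

Definition Fr (j : nat) (t : R) : R :=
  if (j < 2 * M)%N then
    Num.max (u j t) 0 * rhoE j t + Num.min (u j t) 0 * rhoW j.+1 t
  else 0.

Definition Fl (j : nat) (t : R) : R :=
  if j is j'.+1 then Fr j' t else 0.

Variable (H : R -> R).

Definition Edelta (t : R) : R :=
  dx * \sum_(0 <= j < (2 * M).+1)
        (2^-1 * dx * (\sum_(0 <= i < (2 * M).+1) W (j%:Z - i%:Z) * rho i t * rho j t)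
         + H (rho j t) + V (xc j) * rho j t).

Definition Idelta (t : R) : R :=
  dx * \sum_(0 <= j < 2 * M) (u j t) ^+ 2 * Num.min (rhoE j t) (rhoW j.+1 t).

End FVScheme.

(* Main.v *)
Require Import Defs.
From HB Require Import structures.
From mathcomp Require Import all_boot all_order all_algebra.
From mathcomp Require Import all_classical all_reals all_analysis.
From mathcomp Require Import ring lra zify.
Import Order.TTheory GRing.Theory Num.Theory.
Import numFieldNormedType.Exports.
Local Open Scope ring_scope.
Local Open Scope classical_set_scope.
Lemma is_derive_of_cvg (R : realType) (f : R -> R) (x l : R) :
  (fun h : R => h^-1 *: ((f \o shift x) (h *: 1) - f x)) @ 0^' --> l ->
  is_derive x 1 f l.
Proof.
move=> hl; apply: DeriveDef; first exact: (cvgP l).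
by rewrite /derive; apply: cvg_lim.
Qed.

Lemma derive_quot (R : realType) (f : R -> R) (x l : R) :
  is_derive x 1 f l ->
  (fun h : R => h^-1 *: ((f \o shift x) (h *: 1) - f x)) @ 0^' --> l.
Proof.
move=> [df <-]; exact: df.
Qed.

Lemma Hcomp0 {R : realType} (H H' rho : R -> R) (t drho : R) :
  (fun h : R => h^-1 * (H h - H 0)) @ 0^'+ --> H' 0 ->
  (\forall s \near t, 0 <= rho s) ->
  is_derive t 1 rho drho -> rho t = 0 ->
  is_derive t 1 (H \o rho) (H' (rho t) * drho).
Proof.
move=> Hr rpos dr rt0.
pose D := fun r : R => if 0 < r then r^-1 * (H r - H 0) else H' 0.
have D0 : D 0 = H' 0 by rewrite /D ltxx.
have cD : D @ 0 --> D 0.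
  apply/left_right_continuousP; rewrite D0; split.
    have HH : {near 0^'-, (fun h : R => H' 0) =1 D}.
      near=> r; have : r < 0 by near: r; exact: nbhs_left_lt.
      by rewrite /D => /ltW; rewrite leNgt => /negbTE ->.
    have X := cvg_trans (near_eq_cvg HH) (cvg_cst (H' 0)). 
    exact: X.
  have HH : {near 0^'+, (fun h : R => h^-1 * (H h - H 0)) =1 D}.
    near=> r; have : 0 < r by near: r; exact: nbhs_right_gt.
    by rewrite /D => ->.
  have X := cvg_trans (near_eq_cvg HH) Hr. exact: X.
have crho : {for t, continuous rho}.
  apply: differentiable_continuous; apply/derivable1_diffP; exact: ex_derive.
have cDr : (D \o rho) @ t --> D 0.
  by rewrite -rt0; apply: continuous_comp => //; rewrite rt0.
have cDr0 : (fun h : R => D (rho (h *: 1 + t))) @ 0^' --> D 0.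
  apply: cvg_within_filter.
  have -> : (fun h : R => D (rho (h *: 1 + t))) = (D \o rho) \o shift t.
    by apply/funext => h /=; rewrite [h *: _]mulr1.
  by rewrite cvg_comp_shift add0r.
have rpos0 : \forall h \near (0:R), 0 <= rho (h + t).
  by move: rpos; rewrite (near_shift 0 t) subr0.
rewrite rt0; apply: is_derive_of_cvg.
have Q := @cvgM _ _ _ (dnbhs_filter 0) _ _ _ _ (derive_quot _ _ _ _ dr) cDr0.
rewrite D0 mulrC in Q.
refine (cvg_trans _ Q); apply: near_eq_cvg.
near=> h.
have hn0 : h != 0 by near: h; exact: nbhs_dnbhs_neq.
have : 0 <= rho (h + t) by near: h; apply: nbhs_dnbhs; exact: rpos0.
rewrite /= [h *: _]mulr1 rt0 subr0.
rewrite le_eqVlt => /orP[/eqP <-|ap]; first by rewrite /= subrr scaler0 mul0r.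
change (h^-1 * rho (h+t) * D (rho (h + t)) = h^-1 * (H (rho (h+t)) - H 0)).
rewrite /D ap; field.
by rewrite hn0 gt_eqF.
Unshelve. all: by end_near.
Qed.
Section Helpers.
Variable R : realType.
Implicit Types (f g : R -> R) (x a b k : R).

Lemma dD f g x a b : is_derive x 1 f a -> is_derive x 1 g b ->
  is_derive x 1 (fun y => f y + g y) (a + b).
Proof. by move=> ha hb; have -> : (fun y => f y + g y) = (f + g)%R by []; exact: (is_deriveD ha hb). Qed.

Lemma dM f g x a b : is_derive x 1 f a -> is_derive x 1 g b ->
  is_derive x 1 (fun y => f y * g y) (a * g x + f x * b).
Proof.
move=> ha hb; have -> : (fun y => f y * g y) = (f * g)%R by [].
have HM := is_deriveM ha hb.
refine (is_derive_eq HM _).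
by rewrite addrC [a * _]mulrC.
Qed.

Lemma dcM f x a k : is_derive x 1 f a ->
  is_derive x 1 (fun y => k * f y) (k * a).
Proof. by move=> ha; have -> : (fun y => k * f y) = (k \*: f) by []; exact: (is_deriveZ k ha). Qed.

Lemma dsum (s : seq nat) (h : nat -> R -> R) (dh : nat -> R) x :
  (forall i, i \in s -> is_derive x 1 (h i) (dh i)) ->
  is_derive x 1 (fun y => \sum_(i <- s) h i y) (\sum_(i <- s) dh i).
Proof.
elim: s => [|a s IH] hs.
  have -> : (fun y => \sum_(i <- [::]) h i y) = cst 0.
    by apply/funext => y; rewrite big_nil.
  by rewrite big_nil; exact: is_derive_cst.
have -> : (fun y => \sum_(i <- a :: s) h i y) = (fun y => h a y + \sum_(i <- s) h i y).
  by apply/funext => y; rewrite big_cons.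
rewrite big_cons; apply: dD; first by apply: hs; rewrite inE eqxx.
by apply: IH => i his; apply: hs; rewrite inE his orbT.
Qed.
End Helpers.
Lemma ptwise (R : realType) (u a b : R) :
  u ^+ 2 * Num.min a b <= u * (Num.max u 0 * a + Num.min u 0 * b).
Proof.
have mab : Num.min a b <= a /\ Num.min a b <= b.
  by split; rewrite ge_min lexx ?orbT.
rewrite /Order.max /Order.min.
have [u0|u0] := ltP u 0.
  rewrite mul0r add0r mulrA -expr2.
  by apply: ler_wpM2l; [exact: sqr_ge0|case: mab].
rewrite mul0r addr0 mulrA -expr2.
by apply: ler_wpM2l; [exact: sqr_ge0|case: mab].
Qed.

Lemma sbp (R : realType) (x f : nat -> R) n :
  \sum_(0 <= j < n.+1) x j * (f j - (if j is j'.+1 then f j' else 0)) =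
  \sum_(0 <= j < n) f j * (x j - x j.+1) + x n * f n.
Proof.
elim: n => [|n IH]; first by rewrite big_nat1 big_geq // subr0 add0r.
rewrite big_nat_recr //= IH big_nat_recr //=.
ring.
Qed.

Lemma Wsym2 (M : nat) (R : realType) (W : int -> R) i j :
  (forall k : int, `|k| <= (2 * M)%:Z -> W (- k) = W k) ->
  (i <= 2 * M)%N -> (j <= 2 * M)%N -> W (i%:Z - j%:Z) = W (j%:Z - i%:Z).
Proof.
move=> Ws hi hj; rewrite -opprB Ws //.
lia.
Qed.
Lemma Hcomp (R : realType) (H H' rho : R -> R) (t drho : R) :
  (forall r : R, 0 < r -> is_derive r 1 H (H' r)) ->
  (fun h : R => h^-1 * (H h - H 0)) @ 0^'+ --> H' 0 ->
  (\forall s \near t, 0 <= rho s) ->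
  is_derive t 1 rho drho ->
  is_derive t 1 (fun y => H (rho y)) (H' (rho t) * drho).
Proof.
move=> Hd Hr rpos dr.
have := nbhs_singleton rpos; rewrite le_eqVlt => /orP[/eqP r0|rp].
  exact (Hcomp0 H H' rho t drho Hr rpos dr (esym r0)).
exact (@is_derive1_comp R H rho t _ _ (Hd _ rp) dr).
Qed.

Theorem theorem2p2 (R : realType) (L : R) (M : nat)
  (H H' V : R -> R) (W : int -> R) (rho rx : nat -> R -> R) :
  0 < L -> (1 <= M)%N ->
  (* H in C^1([0,oo)) with derivative H' *)
  (forall r : R, 0 < r -> is_derive r 1 H (H' r)) ->
  (fun h : R => h^-1 * (H h - H 0)) @ 0^'+ --> H' 0 ->
  {within [set r : R | 0 <= r], continuous H'} ->
  (* symmetric interaction coefficients W_k, k = -2M..2M *)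
  (forall k : int, `|k| <= (2 * M)%:Z -> W (- k) = W k) ->
  (* nonnegative solution, slopes giving nonnegative point values *)
  (forall (j : nat) (t : R), (j <= 2 * M)%N -> 0 < t -> 0 <= rho j t) ->
  (forall (j : nat) (t : R), (j <= 2 * M)%N -> 0 < t ->
     0 <= rhoE L M rho rx j t /\ 0 <= rhoW L M rho rx j t) ->
  (* the semi-discrete ODE system *)
  (forall (j : nat) (t : R), (j <= 2 * M)%N -> 0 < t ->
     is_derive t 1 (rho j)
       (- ((Fr L M W H' V rho rx j t - Fl L M W H' V rho rx j t) / dx L M))) ->
  forall t : R, 0 < t ->
    derivable (Edelta L M W V rho H) t 1 /\
    (Edelta L M W V rho H)^`() t <= - Idelta L M W H' V rho rx t.
Proof.
move=> L0 M1 Hd Hr _ Wsym rpos _ drho t t0.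
have dx0 : 0 < dx L M by rewrite /dx divr_gt0 // ltr0n; lia.
pose d j := - ((Fr L M W H' V rho rx j t - Fl L M W H' V rho rx j t) / dx L M).
pose r j := rho j t.
pose DE := dx L M * \sum_(0 <= j < (2 * M).+1)
   (2^-1 * dx L M * \sum_(0 <= i < (2 * M).+1)
       ((W (j%:Z - i%:Z) * d i) * r j + W (j%:Z - i%:Z) * r i * d j)
    + H' (r j) * d j + V (xc L M j) * d j).
have hE : is_derive t 1 (Edelta L M W V rho H) DE.
  rewrite /Edelta /DE; apply: dcM; apply: dsum => j; rewrite mem_index_iota => /andP[_ hj].
  have hj' : (j <= 2 * M)%N by [].
  apply: dD; [apply: dD|].
  - apply: dcM; apply: dsum => i; rewrite mem_index_iota => /andP[_ hi].
    apply: dM; last exact: drho.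
    by apply: dcM; apply: drho.
  - apply: Hcomp => //; last exact: drho.
    near=> s; apply: rpos => //; near: s; exact: lt_nbhsr t0.
  - by apply: dcM; apply: drho.
split; first exact: ex_derive.
rewrite derive1E derive_val.
set N := (2 * M)%N.
set A := \sum_(0 <= j < N.+1) \sum_(0 <= i < N.+1) W (j%:Z - i%:Z) * d i * r j.
set B := \sum_(0 <= j < N.+1) \sum_(0 <= i < N.+1) W (j%:Z - i%:Z) * r i * d j.
set C := \sum_(0 <= j < N.+1) (H' (r j) * d j + V (xc L M j) * d j).
have AB : A = B.
  rewrite /A /B exchange_big /=; apply: eq_big_nat => j /andP[_ hj].
  apply: eq_big_nat => i /andP[_ hi].
  rewrite (@Wsym2 M R W i j Wsym) //; ring.
have L1 : DE = dx L M * (\sum_(0 <= j < N.+1) (2^-1 * dx L M * \sum_(0 <= i < N.+1) W (j%:Z - i%:Z) * d i * r j)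
   + \sum_(0 <= j < N.+1) (2^-1 * dx L M * \sum_(0 <= i < N.+1) W (j%:Z - i%:Z) * r i * d j) + C).
  rewrite /DE /C -!big_split /=; congr (_ * _).
  apply: eq_bigr => j _; rewrite big_split /= mulrDr; ring.
have L2 : \sum_(0 <= j < N.+1) xi L M W H' V rho j t * d j = dx L M * B + C.
  rewrite /B /C mulr_sumr -big_split /=; apply: eq_bigr => j _.
  by rewrite /xi /r /N -mulr_suml /= !mulrDl mulrA addrA.
have E1 : DE = dx L M * \sum_(0 <= j < N.+1) xi L M W H' V rho j t * d j.
  by rewrite L1 -!mulr_sumr -/A -/B L2 AB; field.
have dxn0 : dx L M != 0 by rewrite gt_eqF.
have E2 : DE = - \sum_(0 <= j < N.+1) xi L M W H' V rho j t *
    (Fr L M W H' V rho rx j t - (if j is j'.+1 then Fr L M W H' V rho rx j' t else 0)).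
  rewrite E1 mulr_sumr -sumrN; apply: eq_bigr => j _.
  by rewrite /d /Fl; case: j => [|j]; field.
rewrite E2 sbp.
have FN : Fr L M W H' V rho rx N t = 0 by rewrite /Fr ltnn.
rewrite FN mulr0 addr0 lerN2 /Idelta mulr_sumr.
apply: ler_sum_nat => j /andP[_ hj].
have xu : xi L M W H' V rho j t - xi L M W H' V rho j.+1 t = dx L M * u L M W H' V rho j t.
  by rewrite /u; field.
rewrite xu /Fr hj [X in _ <= X]mulrC -[X in _ <= X]mulrA ler_pM2l //.
exact: ptwise.
Unshelve. all: by end_near.
Qed.
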